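(* Let $0<p<q<\infty$, $m\in\mathbb{N}$, and let $E_1,\dots,E_m,F$ be Banach spaces over $\mathbb{K}=\mathbb{R}$ or $\mathbb{C}$. Then $$\eta^{m\text{-}mult}_{(p,q)}(E_1,\dots,E_m;F)\le\frac mp\ \text{ for } 0<q\le 2,\qquad \eta^{m\text{-}mult}_{(p,q)}(E_1,\dots,E_m;F)\le\frac{(qp-2p+2q)m}{2qp}\ \text{ for } q\ge2.$$
   Context: For vectors $x_1,\dots,x_n$ in a Banach space $E$ and $q>0$, $\|(x_k)_{k=1}^n\|_{w,q}:=\sup_{\varphi\in B_{E^*}}\left(\sum_{k=1}^n|\varphi(x_k)|^q\right)^{1/q}$, where $B_{E^*}$ is the closed unit ball of the dual. $\mathcal{L}(E_1,\dots,E_m;F)$ is the space of bounded $m$-linear maps. For $p,q>0$, the multilinear $m$-index of $(p,q)$-summability $\eta^{m\text{-}mult}_{(p,q)}(E_1,\dots,E_m;F)$ is the infimum of all real numbers $s$ with the property: for every $T\in\mathcal{L}(E_1,\dots,E_m;F)$ there is a constant $C\ge0$ (depending only on $m$ and $T$) such that $$\left(\sum_{k_1,\dots,k_m=1}^n\|T(x^{(1)}_{k_1},\dots,x^{(m)}_{k_m})\|^p\right)^{1/p}\le C n^{s}\prod_{i=1}^m\|(x^{(i)}_{k})_{k=1}^n\|_{w,q}$$ for all positive integers $n$ and all $x^{(i)}_k\in E_i$, $1\le k\le n$, $1\le i\le m$. *)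

(* Defs.v *)
From mathcomp Require Import all_boot all_algebra.
From mathcomp Require Import all_classical all_reals all_analysis.
From mathcomp Require Import complex.
Import numFieldNormedType.Exports.
Set Implicit Arguments. Unset Strict Implicit. Unset Printing Implicit Defensive.
Import GRing.Theory Num.Theory.
Local Open Scope classical_set_scope.
Local Open Scope ring_scope.

(* Scalars K are R (with re := id) or the complex numbers R[i] (with re := Re);
   re is only used to read the (real) value of a norm as an element of R. *)

Definition dual_ball (K : numFieldType) (E : normedModType K) : set (E -> K) :=
  [set phi | (forall (a : K) (x y : E), phi (a *: x + y) = a * phi x + phi y)
             /\ (forall x : E, `|phi x| <= `|x|)].

Definition weak_norm (R : realType) (K : numFieldType) (re : K -> R)
    (E : normedModType K) (q : R) (n : nat) (x : 'I_n -> E) : R :=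
  sup [set (\sum_(k < n) (re `|phi (x k)|) `^ q) `^ q^-1 | phi in @dual_ball K E].

Definition multilinear (K : numFieldType) (m : nat)
    (E : 'I_m -> normedModType K) (F : normedModType K)
    (T : (forall i, E i) -> F) : Prop :=
  forall (x : forall i, E i) (i : 'I_m) (a : K) (u v : E i),
    T (dfwith x i (a *: u + v)) = a *: T (dfwith x i u) + T (dfwith x i v).

Definition bounded_multilinear (K : numFieldType) (m : nat)
    (E : 'I_m -> normedModType K) (F : normedModType K)
    (T : (forall i, E i) -> F) : Prop :=
  multilinear T /\ exists C : K, forall x : forall i, E i,
    `|T x| <= C * \prod_(i < m) `|x i|.

Definition summing_exponent (R : realType) (K : numFieldType) (re : K -> R)
    (m : nat) (E : 'I_m -> normedModType K) (F : normedModType K)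
    (p q s : R) : Prop :=
  forall T : (forall i, E i) -> F, bounded_multilinear T ->
  exists C : R, 0 <= C /\
    forall (n : nat) (x : forall i : 'I_m, 'I_n -> E i), (0 < n)%N ->
      (\sum_(k : {ffun 'I_m -> 'I_n}) (re `|T (fun i => x i (k i))|) `^ p) `^ p^-1
        <= C * (n%:R `^ s) * \prod_(i < m) weak_norm re q (x i).

(* eta^{m-mult}_{(p,q)}(E_1,...,E_m;F) as an extended real (inf of empty set = +oo). *)
Definition eta_mult (R : realType) (K : numFieldType) (re : K -> R)
    (m : nat) (E : 'I_m -> normedModType K) (F : normedModType K)
    (p q : R) : \bar R :=
  ereal_inf [set s%:E | s in summing_exponent re E F p q].

(* Main.v *)
Require Import Defs.
From mathcomp Require Import all_boot all_algebra.
From mathcomp Require Import all_classical all_reals all_analysis.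
From mathcomp Require Import complex.
From mathcomp Require Import all_order.
From mathcomp Require Import ring lra.
Import numFieldNormedType.Exports.
Import GRing.Theory Num.Theory.
Local Open Scope ring_scope.

Module Helpers.
Import Order.TTheory.
Set Implicit Arguments. Unset Strict Implicit. Unset Printing Implicit Defensive.

Section HBsec.
Local Open Scope classical_set_scope.
Variable R : realType.

Lemma infS_le (X : Type) (A : set X) (F : X -> R) (L : R) a :
  (forall a, A a -> L <= F a) -> A a -> inf (F @` A) <= F a.
Proof.
move=> HL Aa; apply: ge_inf; last by exists a.
by exists L => _ [b Ab <-]; exact: HL.
Qed.

Lemma le_infS (X : Type) (A : set X) (F : X -> R) (b : R) :
  A !=set0 -> (forall a, A a -> b <= F a) -> b <= inf (F @` A).
Proof.
move=> [a Aa] Hb; apply: lb_le_inf; first by exists (F a), a.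
by move=> _ [c Ac <-]; exact: Hb.
Qed.

Variable V : zmodType.
Variable sc : R -> V -> V.
Hypothesis sc1 : forall v, sc 1 v = v.
Hypothesis scA : forall a b v, sc a (sc b v) = sc (a * b) v.
Hypothesis scDr : forall a u v, sc a (u + v) = sc a u + sc a v.
Hypothesis scDl : forall a b v, sc (a + b) v = sc a v + sc b v.

Lemma sc0 v : sc 0 v = 0.
Proof. by apply: (addrI (sc 0 v)); rewrite -scDl !addr0. Qed.

Lemma scN a v : sc (- a) v = - sc a v.
Proof. by apply: (addrI (sc a v)); rewrite -scDl (subrr a) sc0 subrr. Qed.

Definition sublin (q : V -> R) :=
  (forall x y, q (x + y) <= q x + q y) /\ (forall a x, 0 <= a -> q (sc a x) = a * q x).

Lemma sublin0 q : sublin q -> q 0 = 0.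
Proof. by move=> [_ H]; rewrite -(sc0 0) H // mul0r. Qed.

Lemma sublinN q x : sublin q -> - q (- x) <= q x.
Proof.
move=> sq; have := sq.1 x (- x); rewrite subrr sublin0 //.
by move=> h; lra.
Qed.

Definition shift (q : V -> R) (z x : V) : R :=
  inf [set q (x + sc t z) - t * q z | t in [set t : R | 0 <= t]].

Section Shift.
Variables (q : V -> R) (z : V).
Hypothesis sq : sublin q.

Lemma shift_lb x t : 0 <= t -> - q (- x) <= q (x + sc t z) - t * q z.
Proof.
move=> t0; have := sq.1 (x + sc t z) (- x).
rewrite addrC addKr sq.2 // => h; lra.
Qed.

Lemma shift_le x t : 0 <= t -> shift q z x <= q (x + sc t z) - t * q z.
Proof. by move=> t0; apply: (@infS_le _ _ _ (- q (- x))) => // s; exact: shift_lb. Qed.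

Lemma shift_ge x b : (forall t, 0 <= t -> b <= q (x + sc t z) - t * q z) -> b <= shift q z x.
Proof. by move=> H; apply: le_infS => //; exists 0 => /=. Qed.

Lemma shift_leq x : shift q z x <= q x.
Proof. by have := shift_le x (lexx 0); rewrite sc0 addr0 mul0r subr0. Qed.

Lemma shift_neg : shift q z (- z) <= - q z.
Proof. by have := shift_le (- z) ler01; rewrite sc1 addNr sublin0 // mul1r sub0r. Qed.

Lemma shift_sublin : sublin (shift q z).
Proof.
split.
  move=> x y.
  have key : forall s t, 0 <= s -> 0 <= t -> shift q z (x + y) <=
      (q (x + sc s z) - s * q z) + (q (y + sc t z) - t * q z).
    move=> s t s0 t0; apply: (le_trans (shift_le (x + y) (addr_ge0 s0 t0))).
    have := sq.1 (x + sc s z) (y + sc t z).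
    have -> : x + sc s z + (y + sc t z) = x + y + sc (s + t) z.
      by rewrite scDl; rewrite addrACA.
    move=> h; lra.
  have key2 : forall s, 0 <= s -> shift q z (x + y) - shift q z y <= q (x + sc s z) - s * q z.
    move=> s s0.
    suff : shift q z (x + y) - (q (x + sc s z) - s * q z) <= shift q z y by move=> h; lra.
    apply: shift_ge => t t0; have := key s t s0 t0; move=> h; lra.
  have := shift_ge key2; move=> h; lra.
move=> a x a0; case: (eqVneq a 0) => [->|an0].
  rewrite sc0 mul0r; apply/eqP; rewrite eq_le; apply/andP; split.
    by have := shift_le 0 (lexx 0); rewrite sc0 addr0 (sublin0 sq) => h; lra.
  apply: shift_ge => t t0; rewrite add0r sq.2 // subrr //.
have ap : 0 < a by rewrite lt_def an0 a0.
apply/eqP; rewrite eq_le; apply/andP; split.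
  rewrite -ler_pdivrMl //; apply: shift_ge => t t0.
  rewrite ler_pdivrMl //.
  have := shift_le (sc a x) (mulr_ge0 a0 t0).
  rewrite -scA -scDr sq.2 //.
  have -> : a * (q (x + sc t z) - t * q z) = a * q (x + sc t z) - a * t * q z by ring.
  done.
apply: shift_ge => t t0.
have tap : 0 <= t / a by rewrite divr_ge0.
have := shift_le x tap.
have -> : sc a x + sc t z = sc a (x + sc (t / a) z) by rewrite scDr scA mulrCA divff // mulr1.
rewrite sq.2 // => h.
have -> : t * q z = a * (t / a * q z) by field.
rewrite -mulrBr; exact: ler_wpM2l.
Qed.

End Shift.

Lemma min_linear (q : V -> R) : sublin q -> (forall z x, q x <= shift q z x) ->
  (forall x y, q (x + y) = q x + q y) /\ (forall a x, q (sc a x) = a * q x).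
Proof.
move=> sq mq.
have qN : forall z, q (- z) = - q z.
  move=> z; have h1 := le_trans (mq z (- z)) (shift_neg z sq).
  have h2 := sublinN (- z) sq; rewrite opprK in h2; lra.
split.
  move=> x y; have h1 := sq.1 x y; have h2 := sq.1 (- x) (- y).
  rewrite -opprD !qN in h2; lra.
move=> a x; case: (lerP 0 a) => a0; first exact: sq.2.
have -> : sc a x = - sc (- a) x by rewrite scN opprK.
by rewrite qN sq.2 ?oppr_ge0 ?ltW // mulNr opprK.
Qed.

Section Zornsec.
Variable P : V -> R.
Hypothesis sP : sublin P.

Definition Sset (q : V -> R) := sublin q /\ forall x, q x <= P x.
Definition Tq := {q : V -> R | Sset q}.
Definition Rq : rel Tq := fun a b => `[< forall x, sval b x <= sval a x >].

Lemma chain_bound (A : set Tq) : total_on A Rq -> exists t, forall s, A s -> Rq s t.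
Proof.
move=> tot.
case: (pselect (exists s, A s)) => [[s0 As0]|nA]; last first.
  by exists (exist _ P (conj sP (fun x => lexx _))) => s As; exfalso; apply: nA; exists s.
have lbA : forall x s, A s -> - P (- x) <= sval s x.
  move=> x s As; case: s As => q [sq qP] _ /=.
  by have := qP (- x); have := sublinN x sq; move=> h1 h2; lra.
pose g x := inf [set sval s x | s in A].
have g_le : forall x s, A s -> g x <= sval s x.
  by move=> x s As; apply: (infS_le (L := - P (- x))) => // t At; exact: lbA.
have g_ge : forall x b, (forall s, A s -> b <= sval s x) -> b <= g x.
  by move=> x b H; apply: le_infS => //; exists s0.
have Sg : Sset g.
  split; last by move=> x; apply: le_trans (g_le x s0 As0) _; case: s0 As0 => q [] /=.
  split.
    move=> x y.
    have key : forall s1 s2, A s1 -> A s2 -> g (x + y) <= sval s1 x + sval s2 y.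
      move=> s1 s2 As1 As2; have [/asboolP h|/asboolP h] := tot _ _ As1 As2.
        apply: le_trans (g_le _ s2 As2) _.
        case: s2 As2 h => q2 [sq2 _] /= _ h.
        by apply: le_trans (sq2.1 x y) _; rewrite lerD2r.
      apply: le_trans (g_le _ s1 As1) _.
      case: s1 As1 h => q1 [sq1 _] /= _ h.
      by apply: le_trans (sq1.1 x y) _; rewrite lerD2l.
    have key2 : forall s1, A s1 -> g (x + y) - sval s1 x <= g y.
      move=> s1 As1; apply: g_ge => s2 As2; have := key _ _ As1 As2; lra.
    suff : g (x + y) - g y <= g x by lra.
    apply: g_ge => s1 As1; have := key2 _ As1; lra.
  move=> a x a0.
  have hom : forall s, A s -> sval s (sc a x) = a * sval s x.
    by move=> s _; case: s => q [sq _] /=; exact: sq.2.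
  case: (eqVneq a 0) => [a00|an0].
    apply/eqP; rewrite eq_le; apply/andP; split.
      by apply: le_trans (g_le _ s0 As0) _; rewrite hom // a00 !mul0r.
    by apply: g_ge => s As; rewrite hom // a00 !mul0r.
  have ap : 0 < a by rewrite lt_def an0 a0.
  apply/eqP; rewrite eq_le; apply/andP; split.
    rewrite -ler_pdivrMl //; apply: g_ge => s As.
    by rewrite ler_pdivrMl // -hom //; exact: g_le.
  apply: g_ge => s As; rewrite hom //; apply: ler_wpM2l => //; exact: g_le.
exists (exist _ g Sg) => s As; apply/asboolP => x /=; exact: g_le.
Qed.

Lemma exists_min : exists q : V -> R, Sset q /\ forall z x, q x <= shift q z x.
Proof.
have t0 : Tq := exist _ P (conj sP (fun x => lexx _)).
have Rtr : forall r s t, Rq r s -> Rq s t -> Rq r t.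
  move=> r s t /asboolP h1 /asboolP h2; apply/asboolP => x; exact: le_trans (h2 x) (h1 x).
have [t tmax] := ZL_preorder t0 (R := Rq)
  (fun t => asboolT (fun x => lexx _)) Rtr (@chain_bound).
case: t tmax => q Sq tmax; exists q; split => // z x.
have Ss : Sset (shift q z).
  split; first exact: shift_sublin z Sq.1.
  by move=> y; apply: le_trans (shift_leq z Sq.1 y) (Sq.2 y).
have /asboolP := tmax (exist _ _ Ss) (asboolT (fun y => shift_leq z Sq.1 y)).
by apply.
Qed.
End Zornsec.

Theorem HB_sublin (p : V -> R) (x0 : V) : sublin p ->
  exists f : V -> R, (forall x y, f (x + y) = f x + f y) /\
    (forall a x, f (sc a x) = a * f x) /\ (forall x, f x <= p x) /\ p x0 <= f x0.
Proof.
move=> sp; have sP := shift_sublin x0 sp.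
have [q [[sq qP] mq]] := exists_min sP.
have [qD qZ] := min_linear sq mq.
exists q; split => //; split => //; split.
  by move=> x; apply: le_trans (qP x) (shift_leq x0 sp x).
have h := le_trans (qP (- x0)) (shift_neg x0 sp).
have : q (- x0) = - q x0 by rewrite -{1}(sc1 x0) -scN qZ mulN1r.
lra.
Qed.
End HBsec.

Section NR.
Lemma norming_R (R : realType) (E : normedModType R) (x0 : E) :
  exists phi : E -> R, dual_ball phi /\ `|x0| <= `|phi x0|.
Proof.
have sp : sublin (fun (a : R) (x : E) => a *: x) (fun x : E => `|x|).
  split; first by move=> x y; exact: ler_normD.
  by move=> a x a0; rewrite normrZ ger0_norm.
have [f [fD [fZ [fle fx0]]]] := HB_sublin (sc := fun (a : R) (x : E) => a *: x) (fun v => scale1r v)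
   (fun a b v => scalerA a b v) (fun a u v => scalerDr a u v)
   (fun a b v => scalerDl v a b) x0 sp.
exists f; split.
  split; first by move=> a x y; rewrite fD fZ.
  move=> x; rewrite ler_norml fle andbT.
  have := fle (- x); rewrite normrN.
  have -> : - x = (-1) *: x by rewrite scaleN1r.
  rewrite fZ mulN1r; lra.
by apply: le_trans fx0 _; exact: ler_norm.
Qed.

End NR.

Section Cplx.
Local Open Scope complex_scope.
Variable R : realType.

Lemma ReD (a b : R[i]) : complex.Re (a + b) = complex.Re a + complex.Re b.
Proof. by case: a => ? ?; case: b => ? ?. Qed.

Lemma ReMr (r : R) (z : R[i]) : complex.Re (r%:C * z) = r * complex.Re z.
Proof. case: z => a b /=; ring. Qed.

Lemma Re_le (a b : R[i]) : a <= b -> complex.Re a <= complex.Re b.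
Proof. by rewrite lecE => /andP[]. Qed.

Lemma ge0_ReE (z : R[i]) : 0 <= z -> z = (complex.Re z)%:C.
Proof. by move=> h; rewrite RRe_real // ger0_real. Qed.

Lemma Re_le_norm (z : R[i]) : complex.Re z <= complex.Re `|z|.
Proof.
apply: le_trans (ler_norm (complex.Re z)) _.
have := normc_ge_Re z; rewrite {2}(ge0_ReE (normr_ge0 z)) lecR //.
Qed.

Variable E : normedModType R[i].

Lemma norming_C (x0 : E) :
  exists phi : E -> R[i], dual_ball phi /\ complex.Re `|x0| <= complex.Re `|phi x0|.
Proof.
pose sc (a : R) (x : E) := a%:C *: x.
have sc1 : forall v, sc 1 v = v by move=> v; rewrite /sc (_ : 1%:C = 1) ?scale1r.
have scA : forall a b v, sc a (sc b v) = sc (a * b) v.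
  by move=> a b v; rewrite /sc scalerA; congr (_ *: _); simpc.
have scDr : forall a u v, sc a (u + v) = sc a u + sc a v by move=> *; exact: scalerDr.
have scDl : forall a b v, sc (a + b) v = sc a v + sc b v.
  by move=> a b v; rewrite /sc -scalerDl; congr (_ *: _); simpc.
have sp : sublin sc (fun x : E => complex.Re `|x|).
  split; first by move=> x y; rewrite -ReD; apply: Re_le; exact: ler_normD.
  move=> a x a0; rewrite /sc normrZ ger0_norm ?ReMr // ler0c //.
have [f [fD [fZ [fle fx0]]]] := HB_sublin sc1 scA scDr scDl x0 sp.
pose phi (x : E) := (f x)%:C - 'i * (f ('i *: x))%:C.
have fN : forall x, f (- x) = - f x.
  by move=> x; rewrite -scaleN1r (_ : -1 = (-1)%:C) ?fZ ?mulN1r //; simpc.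
have dec : forall (a : R[i]) (x : E), a *: x = sc (complex.Re a) x + sc (complex.Im a) ('i *: x).
  move=> a x; rewrite /sc scalerA -scalerDl; congr (_ *: _).
  by case: a => u v; simpc.
have fa : forall (a : R[i]) x, f (a *: x) = complex.Re a * f x + complex.Im a * f ('i *: x).
  by move=> a x; rewrite dec fD !fZ.
have fia : forall (a : R[i]) x, f ('i *: (a *: x)) = complex.Re a * f ('i *: x) - complex.Im a * f x.
  move=> a x; rewrite scalerA mulrC -scalerA fa scalerA.
  rewrite (_ : 'i * 'i = -1); last by simpc.
  by rewrite scaleN1r fN mulrN.
have phiZ : forall (a : R[i]) x, phi (a *: x) = a * phi x.
  move=> a x; rewrite /phi fa fia; case: a => u v /=.
  by simpc; congr (_ +i* _); ring.
have phiD : forall x y, phi (x + y) = phi x + phi y.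
  move=> x y; rewrite /phi scalerDr !fD; simpc; congr (_ +i* _); ring.
have RePhi : forall x, complex.Re (phi x) = f x.
  by move=> x; rewrite /phi; simpc.
exists phi; split; last first.
  by apply: le_trans fx0 _; rewrite -RePhi; exact: Re_le_norm.
split; first by move=> a x y; rewrite phiD phiZ.
move=> x; set w := phi x.
have [->|wn0] := eqVneq w 0; first by rewrite normr0 normr_ge0.
set c := `|w| / w.
have cw : phi (c *: x) = `|w| by rewrite phiZ -/w /c divfK.
have nc : `|c| = 1.
  by rewrite /c normrM normfV normr_id divff // normr_eq0.
have h := fle (c *: x); rewrite -RePhi cw normrZ nc mul1r in h.
rewrite (ge0_ReE (normr_ge0 w)) (ge0_ReE (normr_ge0 x)) lecR //.
Qed.
End Cplx.

Section Summ.
Local Open Scope classical_set_scope.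
Variable R : realType.

Lemma powR_le (r x y : R) : 0 <= r -> 0 <= x -> x <= y -> x `^ r <= y `^ r.
Proof.
move=> r0 x0 xy; apply: ge0_ler_powR => //; rewrite nnegrE //; exact: le_trans x0 xy.
Qed.

Lemma powRK (r x : R) : r != 0 -> 0 <= x -> (x `^ r) `^ r^-1 = x.
Proof. by move=> r0 x0; rewrite -powRrM divff // powRr1. Qed.

Variables (K : numFieldType) (re : K -> R).
Hypothesis re_le : forall a b : K, a <= b -> re a <= re b.
Hypothesis re_mul : forall a b : K, 0 <= a -> 0 <= b -> re (a * b) = re a * re b.
Hypothesis re1 : re 1 = 1.
Hypothesis re_ge0 : forall a : K, 0 <= a -> 0 <= re a.

Lemma re_prod (I : finType) (G : I -> K) : (forall i, 0 <= G i) ->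
  re (\prod_i G i) = \prod_i re (G i).
Proof.
move=> G0.
suff [] : 0 <= \prod_i G i /\ re (\prod_i G i) = \prod_i re (G i) by [].
apply: (big_ind2 (fun a b => 0 <= a /\ re a = b)) => //.
  by move=> a1 b1 a2 b2 [h1 <-] [h2 <-]; split; [exact: mulr_ge0|exact: re_mul].

Qed.

Lemma weak_norm_ge (E : normedModType K) (q : R) (n : nat) (x : 'I_n -> E) (j : 'I_n) :
  0 < q -> (exists phi, dual_ball phi /\ re `|x j| <= re `|phi (x j)|) ->
  re `|x j| <= weak_norm re q x.
Proof.
move=> q0 [phi [dphi hphi]].
have qn0 : q != 0 by rewrite gt_eqF.
apply: le_trans hphi _; rewrite /weak_norm.
apply: (@le_trans _ _ ((\sum_(k < n) (re `|phi (x k)|) `^ q) `^ q^-1)).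
  rewrite -[X in X <= _](powRK qn0 (re_ge0 (normr_ge0 _))).
  apply: powR_le; first by rewrite invr_ge0 ltW.
    exact: powR_ge0.
  rewrite (bigD1 j) //= lerDl; apply: sumr_ge0 => k _; exact: powR_ge0.
apply: ub_le_sup; last by exists phi.
exists ((\sum_(k < n) (re `|x k|) `^ q) `^ q^-1) => _ [psi [_ hpsi] <-].
apply: powR_le; first by rewrite invr_ge0 ltW.
  by apply: sumr_ge0 => k _; exact: powR_ge0.
apply: ler_sum => k _; apply: powR_le; first exact: ltW.
  exact: re_ge0.
exact: re_le.
Qed.

Lemma summing_mp (m : nat) (E : 'I_m -> normedModType K) (F : normedModType K) (p q : R) :
  0 < p -> 0 < q ->
  (forall i (y : E i), exists phi, dual_ball phi /\ re `|y| <= re `|phi y|) ->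
  summing_exponent re E F p q (m%:R / p).
Proof.
move=> p0 q0 norming T [Tml [C0 HC0]].
set C := re `|C0|.
have C_ge0 : 0 <= C by apply: re_ge0.
exists C; split => // n x n0.
set w := fun i => weak_norm re q (x i).
have xw : forall i j, re `|x i j| <= w i.
  by move=> i j; apply: weak_norm_ge => //; exact: norming.
have w0 : forall i, 0 <= w i.
  by move=> i; apply: le_trans (xw i (Ordinal n0)); exact: re_ge0.
set B := C * \prod_i w i.
have B0 : 0 <= B by rewrite mulr_ge0 // prodr_ge0.
have pt : forall k : {ffun 'I_m -> 'I_n}, re `|T (fun i => x i (k i))| <= B.
  move=> k; set y := (fun i => x i (k i)).
  have P0 : 0 <= \prod_i `|y i| by apply: prodr_ge0 => i _.
  have h := HC0 y.
  have h2 : `|T y| <= `|C0| * \prod_i `|y i|.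
    have -> : `|C0| * \prod_i `|y i| = `|C0 * \prod_i `|y i| |.
      by rewrite normrM (ger0_norm P0).
    rewrite ger0_norm //; exact: le_trans (normr_ge0 _) h.
  apply: le_trans (re_le h2) _.
  rewrite re_mul // re_prod //; apply: ler_wpM2l => //.
  by apply: ler_prod => i _; rewrite re_ge0 //=; exact: xw.
have p_n0 : p != 0 by rewrite gt_eqF.
have sum_le : \sum_(k : {ffun 'I_m -> 'I_n}) (re `|T (fun i => x i (k i))|) `^ p
    <= (n ^ m)%:R * B `^ p.
  apply: le_trans (ler_sum _ (fun k _ => powR_le (ltW p0) (re_ge0 (normr_ge0 _)) (pt k))) _.
  by rewrite sumr_const card_ffun !card_ord mulr_natl.
have s0 : 0 <= \sum_(k : {ffun 'I_m -> 'I_n}) (re `|T (fun i => x i (k i))|) `^ p.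
  by apply: sumr_ge0 => k _; exact: powR_ge0.
have ip : 0 <= p^-1 by rewrite invr_ge0 ltW.
have := powR_le ip s0 sum_le.
move/le_trans; apply.
rewrite powRM ?powRK // ?powR_ge0 // natrX.
rewrite -powR_mulrn ?ler0n // -powRrM.
by rewrite /B mulrCA mulrA.
Qed.
End Summ.

Lemma bnd_le (R : realType) (p q : R) (m : nat) : 0 < p -> 2 <= q ->
  m%:R / p <= (q * p - 2 * p + 2 * q) * m%:R / (2 * q * p).
Proof.
move=> p0 q2; have q0 : 0 < q by apply: lt_le_trans q2; lra.
have -> : (q * p - 2 * p + 2 * q) * m%:R / (2 * q * p) =
     m%:R / p + m%:R * (q - 2) / (2 * q).
  by field; rewrite !gt_eqF.
rewrite lerDl; apply: divr_ge0; last lra.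
apply: mulr_ge0; [exact: ler0n| lra].
Qed.

End Helpers.
Import Helpers.

Theorem mainTheorem5 (R : realType) (p q : R) (m : nat) :
  0 < p -> p < q ->
  (forall (E : 'I_m -> completeNormedModType R) (F : completeNormedModType R),
      (q <= 2 -> (eta_mult (fun r : R => r) E F p q <= (m%:R / p)%:E)%E) /\
      (2 <= q -> (eta_mult (fun r : R => r) E F p q
                   <= ((q * p - 2 * p + 2 * q) * m%:R / (2 * q * p))%:E)%E)) /\
  (forall (E : 'I_m -> completeNormedModType R[i]) (F : completeNormedModType R[i]),
      (q <= 2 -> (eta_mult (fun z : R[i] => complex.Re z) E F p q <= (m%:R / p)%:E)%E) /\
      (2 <= q -> (eta_mult (fun z : R[i] => complex.Re z) E F p q
                   <= ((q * p - 2 * p + 2 * q) * m%:R / (2 * q * p))%:E)%E)).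
Proof.
move=> p0 pq.
have q0 : 0 < q by exact: Order.POrderTheory.lt_trans p0 pq.
split.
  move=> E F.
  have key : summing_exponent (fun r : R => r) E F p q (m%:R / p).
    apply: summing_mp => //.
    by move=> i y; exact: norming_R.
  have h : (eta_mult (fun r : R => r) E F p q <= (m%:R / p)%:E)%E.
    by apply: ereal_inf_lbound; exists (m%:R / p).
  split => // q2; apply: Order.POrderTheory.le_trans h _.
  by rewrite lee_fin; exact: bnd_le.
move=> E F.
have key : summing_exponent (fun z : R[i] => complex.Re z) E F p q (m%:R / p).
  apply: summing_mp => //.
  - exact: Re_le.
  - move=> a b a0 b0; rewrite (ge0_ReE a0) (ge0_ReE b0).
    by rewrite -rmorphM /=.
  - by move=> a a0; move: a0; rewrite lecE => /andP[].
  - by move=> i y; exact: norming_C.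
have h : (eta_mult (fun z : R[i] => complex.Re z) E F p q <= (m%:R / p)%:E)%E.
  by apply: ereal_inf_lbound; exists (m%:R / p).
split => // q2; apply: Order.POrderTheory.le_trans h _.
by rewrite lee_fin; exact: bnd_le.
Qed.
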